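(* Fix $\alpha\in(0,1/2)$ and $q_1,q_3\in(0,1)$. Define $m^*(3/4,3/4)=16\alpha$, $m^*(3/4,1/4)=m^*(1/4,3/4)=\frac{8(1-2\alpha)}{3}$, $m^*(1/4,1/4)=\frac{16\alpha}{9}$, $m^*=\frac{16(4\alpha+3)}{9}$, $\overline{q}^*=\frac{8\alpha+3}{8\alpha+6}$, $\overline{\lambda}^*=1/m^*$, $$\overline{q}=\frac{1}{m^*}\Big[\big(m^*(\tfrac34,\tfrac34)+m^*(\tfrac34,\tfrac14)\big)q_3+\big(m^*(\tfrac14,\tfrac34)+m^*(\tfrac14,\tfrac14)\big)q_1\Big],$$ $$\overline{\lambda}=\frac{1}{m^*}\Big(m^*(\tfrac34,\tfrac34)\tfrac{1-q_3}{4}+m^*(\tfrac34,\tfrac14)\tfrac{3(1-q_3)}{4}+m^*(\tfrac14,\tfrac34)\tfrac{1-q_1}{4}+m^*(\tfrac14,\tfrac14)\tfrac{3(1-q_1)}{4}\Big),$$ $M=\frac{2(4\alpha+1)}{3(1-q_3)}+\frac{2(3-4\alpha)}{3(1-q_1)}$ and $Q=\big(q_3\frac{2(4\alpha+1)}{3(1-q_3)}+q_1\frac{2(3-4\alpha)}{3(1-q_1)}\big)/M$. Suppose either (1) $\alpha>1/4$, $(12\alpha+3)q_3+(3-4\alpha)q_1>8\alpha+3$ and $\frac{4\alpha+1}{1-q_3}+\frac{3-4\alpha}{1-q_1}<\frac{8(4\alpha+3)}{3}$; or (2) $\alpha\le 1/4$, $6q_3+2q_1>5$ and $\frac{4\alpha+1}{1-q_3}+\frac{3-4\alpha}{1-q_1}<\frac{8(4\alpha+3)}{3}$.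 Then $\overline{q}>\overline{q}^*$ and $\overline{\lambda}<\overline{\lambda}^*$, while the treatment's steady-state performance is worse than the status quo's: $M<m^*$ and $Q<\overline{q}^*$.
   Context: Model: user types $(x,e)\in\{1/4,3/4\}^2$ with per-period inflow masses $\alpha$ for $(3/4,3/4)$ and $(1/4,1/4)$ and $1/2-\alpha$ for $(3/4,1/4)$ and $(1/4,3/4)$; an algorithm gives quality $q(x)\in(0,1)$ to segment $x$ and a type-$(x,e)$ user churns each period with probability $(1-q(x))(1-e)$; the steady-state mass of type $(x,e)$ is $F(x,e)/((1-q(x))(1-e))$. The status quo is $q^*(x)=x$ with steady-state masses $m^*(x,e)$, total $m^*$, ARQ $\overline{q}^*$ and churn rate $\overline{\lambda}^*$. The treatment has $q(1/4)=q_1,q(3/4)=q_3$; $\overline{q},\overline{\lambda}$ are its ARQ and churn rate observed in a one-period experiment on the status quo population; $M,Q$ are its own steady-state total population and ARQ. *)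

(* Defs.v *)
From Stdlib Require Import Reals.
Open Scope R_scope.

Definition m33 (a : R) : R := 16 * a.
Definition m31 (a : R) : R := 8 * (1 - 2 * a) / 3.
Definition m13 (a : R) : R := 8 * (1 - 2 * a) / 3.
Definition m11 (a : R) : R := 16 * a / 9.
Definition mstar (a : R) : R := 16 * (4 * a + 3) / 9.
Definition qbarstar (a : R) : R := (8 * a + 3) / (8 * a + 6).
Definition lambdastar (a : R) : R := 1 / mstar a.

Definition qbar (a q1 q3 : R) : R :=
  / mstar a * ((m33 a + m31 a) * q3 + (m13 a + m11 a) * q1).
Definition lambdabar (a q1 q3 : R) : R :=
  / mstar a * (m33 a * ((1 - q3) / 4) + m31 a * (3 * (1 - q3) / 4)
             + m13 a * ((1 - q1) / 4) + m11 a * (3 * (1 - q1) / 4)).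

Definition Mtreat (a q1 q3 : R) : R :=
  2 * (4 * a + 1) / (3 * (1 - q3)) + 2 * (3 - 4 * a) / (3 * (1 - q1)).
Definition Qtreat (a q1 q3 : R) : R :=
  (q3 * (2 * (4 * a + 1) / (3 * (1 - q3))) + q1 * (2 * (3 - 4 * a) / (3 * (1 - q1))))
  / Mtreat a q1 q3.

(* Main.v *)
Require Import Defs.
From Stdlib Require Import Reals Lra Psatz.
Open Scope R_scope.

Lemma tangentT a x y : 0 < a < 1/2 -> 0 < x -> 0 < y ->
  (4 * a + 1) / x + (3 - 4 * a) / y < 8 * (4 * a + 3) / 3 ->
  9*(4*a+1)*x+(3-4*a)*y > 3*(4*a+3)/2.
Proof.
  intros Ha Hx Hy H.
  assert (E1 : / x >= 8 - 16 * x).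
  { assert (E : /x - (8 - 16*x) = (4*x-1)^2 * /x) by (field; lra).
    assert (0 < /x) by (apply Rinv_0_lt_compat; lra).
    assert (0 <= (4*x-1)^2 * /x) by (apply Rmult_le_pos; [apply Rmult_le_pos; [apply pow2_ge_0|lra] || apply pow2_ge_0 | lra]).
    lra. }
  assert (E2 : / y >= 8/3 - 16 * y / 9).
  { assert (E : /y - (8/3 - 16*y/9) = (4*y-3)^2/9 * /y) by (field; lra).
    assert (0 < /y) by (apply Rinv_0_lt_compat; lra).
    assert (0 <= (4*y-3)^2/9 * /y) by (apply Rmult_le_pos; [apply Rmult_le_pos; [apply pow2_ge_0|lra] || apply pow2_ge_0 | lra]).
    lra. }
  unfold Rdiv in H.
  assert ((4*a+1) * /x >= (4*a+1)*(8 - 16*x)) by nra.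
  assert ((3-4*a) * /y >= (3-4*a)*(8/3 - 16*y/9)) by nra.
  nra.
Qed.

Theorem proposition2 (a q1 q3 : R) :
  0 < a < 1 / 2 -> 0 < q1 < 1 -> 0 < q3 < 1 ->
  ((1 / 4 < a /\
    (12 * a + 3) * q3 + (3 - 4 * a) * q1 > 8 * a + 3 /\
    (4 * a + 1) / (1 - q3) + (3 - 4 * a) / (1 - q1) < 8 * (4 * a + 3) / 3)
   \/
   (a <= 1 / 4 /\
    6 * q3 + 2 * q1 > 5 /\
    (4 * a + 1) / (1 - q3) + (3 - 4 * a) / (1 - q1) < 8 * (4 * a + 3) / 3)) ->
  qbar a q1 q3 > qbarstar a /\ lambdabar a q1 q3 < lambdastar a /\
  Mtreat a q1 q3 < mstar a /\ Qtreat a q1 q3 < qbarstar a.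
Proof.
  intros Ha H1 H3 Hc.
  assert (HC : (4 * a + 1) / (1 - q3) + (3 - 4 * a) / (1 - q1) < 8 * (4 * a + 3) / 3)
    by (destruct Hc as [[_ [_ h]]|[_ [_ h]]]; exact h).
  assert (HT := tangentT a (1-q3) (1-q1) Ha ltac:(lra) ltac:(lra) HC).
  assert (Hfg : (12 * a + 3) * q3 + (3 - 4 * a) * q1 > 8 * a + 3 /\ 6 * q3 + 2 * q1 > 5).
  { set (s := 1 - q3 - 1/4) in *. set (t := 1 - q1 - 3/4) in *.
    assert (Eq3 : q3 = 3/4 - s) by (unfold s; lra).
    assert (Eq1 : q1 = 1/4 - t) by (unfold t; lra).
    rewrite Eq3, Eq1 in *.
    destruct Hc as [[Ha4 [Hf _]]|[Ha4 [Hg _]]].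
    - split; [lra|].
      assert (Hs : (24*a+6)*s > 0) by nra.
      assert (s > 0) by nra.
      assert ((3-4*a)*(3*s+t) < (6-24*a)*s) by nra.
      assert ((6-24*a)*s < 0) by nra.
      assert (3*s+t < 0) by nra.
      lra.
    - split; [|lra].
      assert (48*a*s > 0) by nra.
      assert (s > 0) by nra.
      assert ((3-4*a)*t < -3*(3-4*a)*s) by nra.
      nra. }
  destruct Hfg as [Hf Hg].
  assert (HM : Mtreat a q1 q3 < mstar a).
  { unfold Mtreat, mstar.
    assert (E : 2 * (4 * a + 1) / (3 * (1 - q3)) + 2 * (3 - 4 * a) / (3 * (1 - q1))
              = 2/3 * ((4 * a + 1) / (1 - q3) + (3 - 4 * a) / (1 - q1)))
      by (field; lra).
    rewrite E. lra. }
  assert (HMpos : 0 < Mtreat a q1 q3).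
  { unfold Mtreat.
    assert (0 < 2 * (4 * a + 1) / (3 * (1 - q3))) by (apply Rdiv_lt_0_compat; lra).
    assert (0 < 2 * (3 - 4 * a) / (3 * (1 - q1))) by (apply Rdiv_lt_0_compat; lra).
    lra. }
  split; [|split; [|split]].
  - unfold qbar, qbarstar, mstar, m33, m31, m13, m11.
    assert (E : / (16 * (4 * a + 3) / 9) *
      ((16 * a + 8 * (1 - 2 * a) / 3) * q3 + (8 * (1 - 2 * a) / 3 + 16 * a / 9) * q1)
      = ((12*a+3)*q3 + (3-4*a)*q1) / (8*a+6)) by (field; lra).
    rewrite E. apply Rmult_gt_compat_r; [apply Rinv_0_lt_compat; lra| lra].
  - unfold lambdabar, lambdastar, mstar, m33, m31, m13, m11.
    assert (E : / (16 * (4 * a + 3) / 9) *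
      (16 * a * ((1 - q3) / 4) + 8 * (1 - 2 * a) / 3 * (3 * (1 - q3) / 4) +
       8 * (1 - 2 * a) / 3 * ((1 - q1) / 4) + 16 * a / 9 * (3 * (1 - q1) / 4))
      = (2*(1-q3) + 2*(1-q1)/3) * / (16 * (4 * a + 3) / 9)) by (field; lra).
    rewrite E. unfold Rdiv at 3. rewrite Rmult_1_l.
    assert (0 < / (16 * (4 * a + 3) / 9)) by (apply Rinv_0_lt_compat; lra).
    nra.
  - exact HM.
  - assert (E : Qtreat a q1 q3 = 1 - (8/3) / Mtreat a q1 q3).
    { unfold Qtreat. apply (Rmult_eq_reg_r (Mtreat a q1 q3)); [|lra].
      unfold Rdiv at 1. rewrite Rmult_assoc, Rinv_l by lra. rewrite Rmult_1_r.
      rewrite Rmult_minus_distr_r, Rmult_1_l.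
      unfold Rdiv at 3. rewrite Rmult_assoc, Rinv_l by lra. rewrite Rmult_1_r.
      unfold Mtreat. field. lra. }
    rewrite E. unfold qbarstar.
    assert (E2 : (8 * a + 3) / (8 * a + 6) = 1 - 3 / (8*a+6)) by (field; lra).
    rewrite E2.
    assert (3 / (8*a+6) < (8/3) / Mtreat a q1 q3); [|lra].
    unfold mstar in HM.
    apply (Rmult_lt_reg_r ((8*a+6) * Mtreat a q1 q3)); [nra|].
    assert (E3 : 3 / (8 * a + 6) * ((8 * a + 6) * Mtreat a q1 q3) = 3 * Mtreat a q1 q3)
      by (field; lra).
    assert (E4 : 8 / 3 / Mtreat a q1 q3 * ((8 * a + 6) * Mtreat a q1 q3) = 8/3*(8*a+6))
      by (field; lra).
    rewrite E3, E4. lra.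
Qed.
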